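(* Let $\mathcal M=\langle M,<,+,\{x\mapsto\lambda x\}_{\lambda\in\Lambda}\rangle$ be an ordered vector space over an ordered division ring $\Lambda$, and let $E\subseteq\prod_{i\in[r]}M^{d_i}$ be a semilinear set. Then $Zar^\infty(E)$ holds: there is $\alpha\in\mathbb R_{>0}$ such that if $E$ contains no infinite grid, then $|E\cap B|\le\alpha\,\delta(B)$ for every finite grid $B$.
   Context: A semilinear set is a set definable (with parameters) in $\mathcal M$. A grid is a product $B=B_1\times\dots\times B_r$ with $B_i\subseteq M^{d_i}$; finite/infinite if each $B_i$ is. $\delta(B)=\sum_{1\le i_1<\dots<i_{r-1}\le r}\prod_{j=1}^{r-1}|B_{i_j}|$. *)

(* Defs.v *)
From HB Require Import structures.
From mathcomp Require Import all_boot all_order all_algebra.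
From mathcomp Require Import finmap.
From Stdlib Require Import Rdefinitions Raxioms ClassicalDescription.

Set Implicit Arguments.
Unset Strict Implicit.
Unset Printing Implicit Defensive.
Import GRing.Theory.
Local Open Scope ring_scope.

Definition ordered_division_ring (L : unitRingType) (ltL : rel L) : Prop :=
  (forall x : L, x != 0 -> x \is a GRing.unit) /\
  (forall x, ~~ ltL x x) /\
  (forall x y z, ltL x y -> ltL y z -> ltL x z) /\
  (forall x y, (ltL x y || (x == y) || ltL y x)) /\
  (forall x y z, ltL x y -> ltL (x + z) (y + z)) /\
  (forall x y, ltL 0 x -> ltL 0 y -> ltL 0 (x * y)).

Definition ordered_vector_space (L : unitRingType) (ltL : rel L)
    (M : lmodType L) (ltM : rel M) : Prop :=
  (forall x : M, ~~ ltM x x) /\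
  (forall x y z, ltM x y -> ltM y z -> ltM x z) /\
  (forall x y, (ltM x y || (x == y) || ltM y x)) /\
  (forall x y z, ltM x y -> ltM (x + z) (y + z)) /\
  (forall (l : L) x y, ltL 0 l -> ltM x y -> ltM (l *: x) (l *: y)).

Inductive term (L : unitRingType) (M : lmodType L) (V : Type) : Type :=
| TVar : V -> term M V
| TPar : M -> term M V
| TAdd : term M V -> term M V -> term M V
| TScale : L -> term M V -> term M V.

Inductive formula (L : unitRingType) (M : lmodType L) : Type -> Type :=
| FEq V : term M V -> term M V -> formula M V
| FLt V : term M V -> term M V -> formula M V
| FNot V : formula M V -> formula M V
| FAnd V : formula M V -> formula M V -> formula M V
| FEx V : formula M (option V) -> formula M V.  (* binds the new variable None *)

Fixpoint teval (L : unitRingType) (M : lmodType L) (V : Type)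
    (e : V -> M) (t : term M V) : M :=
  match t with
  | TVar v => e v
  | TPar c => c
  | TAdd t1 t2 => teval e t1 + teval e t2
  | TScale l t1 => l *: teval e t1
  end.

Fixpoint sat_ (L : unitRingType) (M : lmodType L) (ltM : rel M) (V : Type)
    (f : formula M V) {struct f} : (V -> M) -> Prop :=
  match f in formula _ V0 return (V0 -> M) -> Prop with
  | FEq _ t1 t2 => fun e => teval e t1 = teval e t2
  | FLt _ t1 t2 => fun e => ltM (teval e t1) (teval e t2)
  | FNot _ g => fun e => ~ sat_ ltM g e
  | FAnd _ g h => fun e => sat_ ltM g e /\ sat_ ltM h e
  | FEx _ g => fun e =>
      exists a : M, sat_ ltM g (fun o => if o is Some v then e v else a)
  end.

Definition sat (L : unitRingType) (M : lmodType L) (ltM : rel M) (V : Type)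
    (e : V -> M) (f : formula M V) : Prop := sat_ ltM f e.

Definition point (L : unitRingType) (M : lmodType L) (r : nat) (d : 'I_r -> nat)
  := forall i : 'I_r, 'rV[M]_(d i).

(* coordinate variables: the j-th coordinate of the i-th block *)
Definition coord_env (L : unitRingType) (M : lmodType L) (r : nat) (d : 'I_r -> nat)
    (p : point M d) : {i : 'I_r & 'I_(d i)} -> M :=
  fun v => p (tag v) 0 (tagged v).

Definition semilinear_set (L : unitRingType) (M : lmodType L) (ltM : rel M)
    (r : nat) (d : 'I_r -> nat) (E : point M d -> Prop) : Prop :=
  exists f : formula M {i : 'I_r & 'I_(d i)},
    forall p, E p <-> sat ltM (coord_env p) f.

Definition infinite_set (T : eqType) (A : T -> Prop) : Prop :=
  ~ exists s : seq T, forall x, A x -> x \in s.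

Definition contains_infinite_grid (L : unitRingType) (M : lmodType L)
    (r : nat) (d : 'I_r -> nat) (E : point M d -> Prop) : Prop :=
  exists B : forall i : 'I_r, 'rV[M]_(d i) -> Prop,
    (forall i, infinite_set (B i)) /\
    (forall p : point M d, (forall i, B i (p i)) -> E p).

Definition pbool (P : Prop) : bool :=
  if excluded_middle_informative P then true else false.

Definition grid_count (L : unitRingType) (M : lmodType L)
    (r : nat) (d : 'I_r -> nat) (E : point M d -> Prop)
    (B : forall i : 'I_r, {fset 'rV[M]_(d i)}) : nat :=
  #|[set f : {dffun forall i : 'I_r, B i} | pbool (E (fun i => val (f i))) ]|.

Definition grid_delta (L : unitRingType) (M : lmodType L)
    (r : nat) (d : 'I_r -> nat) (B : forall i : 'I_r, {fset 'rV[M]_(d i)}) : nat :=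
  (\sum_(I : {set 'I_r} | #|I| == r.-1) \prod_(i in I) #|` B i|)%N.

(* Main.v *)
Require Import Defs.
From HB Require Import structures.
From mathcomp Require Import all_boot all_order all_algebra.
From mathcomp Require Import finmap.
From Stdlib Require Import Rdefinitions Raxioms RIneq Classical ClassicalDescription IndefiniteDescription.

Set Implicit Arguments. Unset Strict Implicit. Unset Printing Implicit Defensive.
Import GRing.Theory.
Local Open Scope ring_scope.

Section Ord.
Variables (L : unitRingType) (ltL : rel L) (M : lmodType L) (ltM : rel M).
Hypothesis HL : ordered_division_ring ltL.
Hypothesis HM : ordered_vector_space ltL ltM.

Lemma Lunit (x : L) : x != 0 -> x \is a GRing.unit. Proof. by move: HL => [h _]; apply: h. Qed.
Lemma Lirr (x : L) : ~~ ltL x x. Proof. by move: HL => [_ [h _]]; apply: h. Qed.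
Lemma Ltrans (x y z : L) : ltL x y -> ltL y z -> ltL x z. Proof. by move: HL => [_ [_ [h _]]]; apply: h. Qed.
Lemma Ltot (x y : L) : ltL x y || (x == y) || ltL y x. Proof. by move: HL => [_ [_ [_ [h _]]]]; apply: h. Qed.
Lemma Ladd (x y z : L) : ltL x y -> ltL (x + z) (y + z). Proof. by move: HL => [_ [_ [_ [_ [h _]]]]]; apply: h. Qed.
Lemma Lmul (x y : L) : ltL 0 x -> ltL 0 y -> ltL 0 (x * y). Proof. by move: HL => [_ [_ [_ [_ [_ h]]]]]; apply: h. Qed.

Lemma Lsub (x y : L) : ltL x y = ltL 0 (y - x).
Proof.
apply/idP/idP => h.
  by have := Ladd (- x) h; rewrite subrr.
by have := Ladd x h; rewrite add0r subrK.
Qed.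

Lemma Lopp (x : L) : ltL x 0 = ltL 0 (- x).
Proof. by rewrite Lsub sub0r. Qed.

Lemma Lasym (x y : L) : ltL x y -> ~~ ltL y x.
Proof. by move=> h; apply/negP => h'; have := Ltrans h h'; rewrite (negbTE (Lirr x)). Qed.

Lemma Lneq0 (x : L) : ltL 0 x -> x != 0.
Proof. by move=> h; apply/eqP => e; move: h; rewrite e (negbTE (Lirr 0)). Qed.

Lemma Lsign (x : L) : x != 0 -> ltL 0 x \/ ltL x 0.
Proof.
move=> nz; have := Ltot 0 x; rewrite eq_sym (negbTE nz) orbF.
by case/orP; [left|right].
Qed.

Lemma L01 : ltL 0 1.
Proof.
case: (Lsign (oner_neq0 L)) => // h.
have h' : ltL 0 (-1) by rewrite -Lopp.
have := Lmul h' h'; rewrite mulrNN mulr1 => h1.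
by have := Lasym h1; rewrite h.
Qed.

Lemma Linv_pos (x : L) : ltL 0 x -> ltL 0 x^-1.
Proof.
move=> hx; have ux := Lunit (Lneq0 hx).
have nz : x^-1 != 0 by rewrite invr_eq0 (Lneq0 hx).
case: (Lsign nz) => // h.
rewrite Lopp in h; have := Lmul hx h; rewrite mulrN mulrV // -Lopp => h1.
by have := Lasym h1; rewrite L01.
Qed.

Lemma Lnat n : ltL 0 (n.+1%:R).
Proof.
elim: n => [|n IH]; first by rewrite L01.
apply: Ltrans IH _; rewrite Lsub -natrB // subSnn; exact: L01.
Qed.

Lemma Mirr (x : M) : ~~ ltM x x. Proof. by move: HM => [h _]; apply: h. Qed.
Lemma Mtrans (x y z : M) : ltM x y -> ltM y z -> ltM x z. Proof. by move: HM => [_ [h _]]; apply: h. Qed.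
Lemma Mtot (x y : M) : ltM x y || (x == y) || ltM y x. Proof. by move: HM => [_ [_ [h _]]]; apply: h. Qed.
Lemma Madd (x y z : M) : ltM x y -> ltM (x + z) (y + z). Proof. by move: HM => [_ [_ [_ [h _]]]]; apply: h. Qed.
Lemma Mscale (l : L) (x y : M) : ltL 0 l -> ltM x y -> ltM (l *: x) (l *: y). Proof. by move: HM => [_ [_ [_ [_ h]]]]; apply: h. Qed.

Lemma Maddl (x y z : M) : ltM x y -> ltM (z + x) (z + y).
Proof. by rewrite ![z + _]addrC; apply: Madd. Qed.

Lemma Msub (x y : M) : ltM x y = ltM 0 (y - x).
Proof.
apply/idP/idP => h.
  by have := Madd (- x) h; rewrite subrr.
by have := Madd x h; rewrite add0r subrK.
Qed.

Lemma Mopp (x y : M) : ltM x y = ltM (- y) (- x).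
Proof. by rewrite Msub [in RHS]Msub opprK addrC. Qed.

Lemma Masym (x y : M) : ltM x y -> ~~ ltM y x.
Proof. by move=> h; apply/negP => h'; have := Mtrans h h'; rewrite (negbTE (Mirr x)). Qed.

Lemma Madd2 (x y x' y' : M) : ltM x y -> ltM x' y' -> ltM (x + x') (y + y').
Proof. by move=> h h'; apply: Mtrans (Madd x' h) (Maddl y h'). Qed.

Definition leM (x y : M) := ltM x y \/ x = y.

Lemma leM_refl (x : M) : leM x x. Proof. by right. Qed.
Lemma lt_leM (x y z : M) : ltM x y -> leM y z -> ltM x z.
Proof. by move=> h [h'|<-] //; apply: Mtrans h h'. Qed.
Lemma le_ltM (x y z : M) : leM x y -> ltM y z -> ltM x z.
Proof. by move=> [h|->] h' //; apply: Mtrans h h'. Qed.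
Lemma leM_trans (x y z : M) : leM x y -> leM y z -> leM x z.
Proof. by move=> [h|->] // h'; left; apply: lt_leM h h'. Qed.
Lemma leM_add2 (x y x' y' : M) : leM x y -> leM x' y' -> leM (x + x') (y + y').
Proof.
move=> [h|->] [h'|->]; first (by left; apply: Madd2); last by right.
  by left; apply: Madd.
by left; apply: Maddl.
Qed.
Lemma ltleM_add2 (x y x' y' : M) : ltM x y -> leM x' y' -> ltM (x + x') (y + y').
Proof. by move=> h [h'|->]; [apply: Madd2|apply: Madd]. Qed.

Lemma Mnlt (x y : M) : ~ ltM x y -> leM y x.
Proof.
move=> h; have := Mtot x y; case/orP; first case/orP.
- by move=> h'; case: h.
- by move/eqP => ->; right.
- by left.
Qed.

Lemma Mscale_le (l : L) (x y : M) : ltL 0 l -> leM x y -> leM (l *: x) (l *: y).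
Proof. by move=> hl [h|->]; [left; apply: Mscale|right]. Qed.

Lemma Mscale_neg (l : L) (x y : M) : ltL l 0 -> ltM x y -> ltM (l *: y) (l *: x).
Proof.
move=> hl h; rewrite Lopp in hl; have := Mscale hl h.
by rewrite !scaleNr -Mopp.
Qed.

Lemma Mscale_pos (l : L) (x : M) : ltL 0 l -> ltM 0 x -> ltM 0 (l *: x).
Proof. by move=> hl h; have := Mscale hl h; rewrite scaler0. Qed.

Lemma Mscale_inv (l : L) (x y : M) : ltL 0 l -> ltM (l *: x) (l *: y) -> ltM x y.
Proof.
move=> hl h; have := Mscale (Linv_pos hl) h.
by rewrite !scalerA mulVr ?scale1r // Lunit // Lneq0.
Qed.

Definition half : L := (1 + 1)^-1.

Lemma L2 : ltL 0 (1 + 1). Proof. by have := Lnat 1; rewrite mulr2n. Qed.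

Lemma half_double (x : M) : half *: (x + x) = x.
Proof.
by rewrite -{1 2}(scale1r x) -scalerDl scalerA mulVr ?scale1r // Lunit // Lneq0 // L2.
Qed.

Lemma Mmid (x y : M) : ltM x y -> ltM x (half *: (x + y)) /\ ltM (half *: (x + y)) y.
Proof.
move=> h; have hh := Linv_pos L2; split.
  by rewrite -{1}(half_double x); apply: Mscale => //; apply: Maddl.
by rewrite -{2}(half_double y); apply: Mscale => //; apply: Madd.
Qed.

Lemma half_lt (x : M) : ltM 0 x -> ltM (half *: x) x.
Proof. by move=> h; have [_] := Mmid h; rewrite add0r. Qed.

Lemma half_pos (x : M) : ltM 0 x -> ltM 0 (half *: x).
Proof. by move=> h; have [] := Mmid h; rewrite add0r. Qed.


Fixpoint Pall {T} (P : T -> Prop) (s : seq T) : Prop :=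
  if s is x :: s' then P x /\ Pall P s' else True.
Fixpoint Pex {T} (P : T -> Prop) (s : seq T) : Prop :=
  if s is x :: s' then P x \/ Pex P s' else False.

Lemma Pall_cat T (P : T -> Prop) s t : Pall P (s ++ t) <-> Pall P s /\ Pall P t.
Proof. elim: s => [|x s IH] /=; [tauto| rewrite IH; tauto]. Qed.
Lemma Pex_cat T (P : T -> Prop) s t : Pex P (s ++ t) <-> Pex P s \/ Pex P t.
Proof. elim: s => [|x s IH] /=; [tauto| rewrite IH; tauto]. Qed.
Lemma Pall_map T U (f : T -> U) (P : U -> Prop) s : Pall P (map f s) <-> Pall (fun x => P (f x)) s.
Proof. elim: s => [|x s IH] /=; [tauto| rewrite IH; tauto]. Qed.
Lemma Pex_map T U (f : T -> U) (P : U -> Prop) s : Pex P (map f s) <-> Pex (fun x => P (f x)) s.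
Proof. elim: s => [|x s IH] /=; [tauto| rewrite IH; tauto]. Qed.
Lemma Pall_filter T (q : pred T) (P : T -> Prop) s : Pall P (filter q s) <-> Pall (fun x => q x -> P x) s.
Proof.
elim: s => [|x s IH] /=; first tauto.
case: (q x) => /=; rewrite IH; split.
- by case=> h1 h2; split.
- by case=> h1 h2; split => //; apply: h1.
- by move=> h; split.
- by case.
Qed.
Lemma Pall_flatten T U (f : T -> seq U) (P : U -> Prop) s :
  Pall P (flatten (map f s)) <-> Pall (fun x => Pall P (f x)) s.
Proof. elim: s => [|x s IH] /=; first tauto. rewrite Pall_cat IH; tauto. Qed.
Lemma Pex_flatten T U (f : T -> seq U) (P : U -> Prop) s :
  Pex P (flatten (map f s)) <-> Pex (fun x => Pex P (f x)) s.
Proof. elim: s => [|x s IH] /=; first tauto. rewrite Pex_cat IH; tauto. Qed.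
Lemma Pall_impl T (P Q : T -> Prop) s : (forall x, P x -> Q x) -> Pall P s -> Pall Q s.
Proof. move=> h; elim: s => [|x s IH] //= [] /h ? /IH; tauto. Qed.
Lemma Pall_impl2 T (P Q R : T -> Prop) s : (forall x, P x -> Q x -> R x) ->
  Pall P s -> Pall Q s -> Pall R s.
Proof. move=> h; elim: s => [|x s IH] //= [] hp hps [] hq hqs; split; auto. Qed.
Lemma Pall_iff T (P Q : T -> Prop) s : (forall x, P x <-> Q x) -> (Pall P s <-> Pall Q s).
Proof. by move=> h; split; apply: Pall_impl => x; rewrite h. Qed.
Lemma Pex_iff T (P Q : T -> Prop) s : (forall x, P x <-> Q x) -> (Pex P s <-> Pex Q s).
Proof. move=> h; elim: s => [|x s IH] /=; [tauto| rewrite h IH; tauto]. Qed.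
Lemma not_Pall T (P : T -> Prop) s : ~ Pall P s <-> Pex (fun x => ~ P x) s.
Proof. elim: s => [|x s IH] /=; first tauto. rewrite -IH. split; [|tauto].
  move=> h; case: (classic (P x)) => hx; [right => ?|left]; tauto. Qed.
Lemma Pex_exists T A (P : A -> T -> Prop) s :
  (exists a, Pex (P a) s) <-> Pex (fun x => exists a, P a x) s.
Proof. elim: s => [|x s IH] /=; first by split => [[]|]. rewrite -IH.
  split; [case=> a [h|h]; [left|right]; exists a|case=> [[a h]|[a h]]; exists a]; tauto. Qed.
Lemma Pall_In T (P : T -> Prop) s : Pall P s <-> forall x, List.In x s -> P x.
Proof. elim: s => [|x s IH] /=; first tauto. rewrite IH. split.
  by move=> [h1 h2] y [<-|]; auto. by move=> h; split; auto. Qed.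

Definition lin (V : Type) := (seq (V * L) * M)%type.
Definition leval V (e : V -> M) (l : lin V) : M := \sum_(p <- l.1) p.2 *: e p.1 + l.2.
Definition ladd V (l1 l2 : lin V) : lin V := (l1.1 ++ l2.1, l1.2 + l2.2).
Definition lscale V (c : L) (l : lin V) : lin V :=
  ([seq (p.1, c * p.2) | p <- l.1], c *: l.2).
Definition lopp V (l : lin V) : lin V := lscale (-1) l.
Definition lsub V (l1 l2 : lin V) : lin V := ladd l1 (lopp l2).

Lemma leval_add V (e : V -> M) l1 l2 : leval e (ladd l1 l2) = leval e l1 + leval e l2.
Proof. by rewrite /leval /= big_cat /= addrACA. Qed.
Lemma leval_scale V (e : V -> M) c l : leval e (lscale c l) = c *: leval e l.
Proof.
rewrite /leval /= big_map scalerDr scaler_sumr; congr (_ + _).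
by apply: eq_bigr => p _; rewrite scalerA.
Qed.
Lemma leval_opp V (e : V -> M) l : leval e (lopp l) = - leval e l.
Proof. by rewrite leval_scale scaleN1r. Qed.
Lemma leval_sub V (e : V -> M) l1 l2 : leval e (lsub l1 l2) = leval e l1 - leval e l2.
Proof. by rewrite leval_add leval_opp. Qed.

Fixpoint tlin V (t : term M V) : lin V :=
  match t with
  | TVar v => ([:: (v, 1)], 0)
  | TPar c => ([::], c)
  | TAdd a b => ladd (tlin a) (tlin b)
  | TScale c a => lscale c (tlin a)
  end.

Lemma tlinE V (e : V -> M) t : teval e t = leval e (tlin t).
Proof.
elim: t => [v|c|a IHa b IHb|c a IH] /=.
- by rewrite /leval /= big_seq1 /= scale1r addr0.
- by rewrite /leval /= big_nil add0r.
- by rewrite leval_add IHa IHb.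
- by rewrite leval_scale IH.
Qed.

Definition cN V (l : lin (option V)) : L :=
  \sum_(p <- l.1) (if p.1 is None then p.2 else 0).
Fixpoint rlist V (s : seq (option V * L)) : seq (V * L) :=
  match s with
  | [::] => [::]
  | (Some v, c) :: s' => (v, c) :: rlist s'
  | (None, _) :: s' => rlist s'
  end.
Definition lrest V (l : lin (option V)) : lin V := (rlist l.1, l.2).
Definition ext V (e : V -> M) (a : M) : option V -> M :=
  fun o => if o is Some v then e v else a.

Lemma leval_ext V (e : V -> M) a l :
  leval (ext e a) l = cN l *: a + leval e (lrest l).
Proof.
case: l => s c; rewrite /leval /cN /lrest /=; elim: s => [|[[v|] x] s IH] /=.
- by rewrite !big_nil scale0r !add0r.
- by rewrite !big_cons /= add0r -!addrA IH; apply: addrCA.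
- by rewrite !big_cons /= -!addrA IH scalerDl -addrA.
Qed.

Definition cnj V := (seq (lin V) * seq (lin V))%type.
Definition csat V (e : V -> M) (C : cnj V) : Prop :=
  Pall (fun l => leval e l = 0) C.1 /\ Pall (fun l => ltM 0 (leval e l)) C.2.
Definition dsat V (e : V -> M) (D : seq (cnj V)) : Prop := Pex (csat e) D.

Definition cand V (C1 C2 : cnj V) : cnj V := (C1.1 ++ C2.1, C1.2 ++ C2.2).
Definition dand V (D1 D2 : seq (cnj V)) : seq (cnj V) :=
  flatten (map (fun C1 => map (cand C1) D2) D1).

Lemma cand_ex V (e : V -> M) C1 D2 :
  Pex (fun x => csat e (cand C1 x)) D2 <-> csat e C1 /\ Pex (csat e) D2.
Proof.
elim: D2 => [|C2 D2 IH2] /=; first tauto.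
rewrite IH2 /csat /cand /= !Pall_cat; tauto.
Qed.

Lemma dand_sat V (e : V -> M) D1 D2 : dsat e (dand D1 D2) <-> dsat e D1 /\ dsat e D2.
Proof.
rewrite /dsat /dand Pex_flatten.
elim: D1 => [|C1 D1 IH] /=; first tauto.
rewrite IH Pex_map cand_ex; tauto.
Qed.

Definition cnot V (C : cnj V) : seq (cnj V) :=
  flatten (map (fun l => [:: ([::], [:: l]); ([::], [:: lopp l])]) C.1) ++
  flatten (map (fun l => [:: ([:: l], [::]); ([::], [:: lopp l])]) C.2).

Lemma neq0_iff (x : M) : x <> 0 <-> ltM 0 x \/ ltM 0 (- x).
Proof.
rewrite -oppr0 -Mopp oppr0; split.
  move=> nz; have := Mtot 0 x; case/orP; first case/orP.
  - by left.
  - by move/eqP => e; case: nz.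
  - by right.
move=> [h|h] e; move: h; rewrite e; apply/negP; exact: Mirr.
Qed.

Lemma nlt0_iff (x : M) : ~ ltM 0 x <-> x = 0 \/ ltM 0 (- x).
Proof.
rewrite -oppr0 -Mopp oppr0; split.
  move=> nz; have := Mtot 0 x; case/orP; first case/orP.
  - by move=> h; case: nz.
  - by move/eqP => e; left.
  - by right.
case=> [->|h]; first by apply/negP; exact: Mirr.
by move=> h'; have := Masym h; rewrite h'.
Qed.

Lemma cnot_sat V (e : V -> M) C : dsat e (cnot C) <-> ~ csat e C.
Proof.
rewrite /dsat /cnot Pex_cat !Pex_flatten /csat.
have h1 : Pex (fun l => Pex (csat e) [:: ([::], [:: l]); ([::], [:: lopp l])]) C.1
   <-> ~ Pall (fun l => leval e l = 0) C.1.
  rewrite not_Pall; apply: Pex_iff => l /=; rewrite /csat /= leval_opp neq0_iff; tauto.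
have h2 : Pex (fun l => Pex (csat e) [:: ([:: l], [::]); ([::], [:: lopp l])]) C.2
   <-> ~ Pall (fun l => ltM 0 (leval e l)) C.2.
  rewrite not_Pall; apply: Pex_iff => l /=; rewrite /csat /= leval_opp nlt0_iff; tauto.
rewrite h1 h2; split; [tauto|].
move=> h; case: (classic (Pall (fun l => leval e l = 0) C.1)); tauto.
Qed.

Definition dnot V (D : seq (cnj V)) : seq (cnj V) :=
  foldr (fun C acc => dand (cnot C) acc) [:: ([::], [::])] D.

Lemma dnot_sat V (e : V -> M) D : dsat e (dnot D) <-> ~ dsat e D.
Proof.
elim: D => [|C D IH] /=.
  by rewrite /dsat /= /csat /=; tauto.
rewrite dand_sat IH cnot_sat /dsat /=; tauto.
Qed.

(* ---------- Fourier-Motzkin elimination ---------- *)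
Fixpoint pick_piv V (s : seq (lin (option V))) : option (lin (option V)) :=
  match s with
  | [::] => None
  | l :: s' => if cN l != 0 then Some l else pick_piv s'
  end.

Lemma pick_piv_some V s l0 : @pick_piv V s = Some l0 ->
  cN l0 != 0 /\ forall P, Pall P s -> P l0.
Proof.
elim: s => [|l s IH] //=; case: ifP => h.
  by case=> <-; split => // P [].
by move/IH => [h1 h2]; split => // P [_]; apply: h2.
Qed.

Lemma pick_piv_none V s : @pick_piv V s = None -> Pall (fun l => cN l = 0) s.
Proof.
elim: s => [|l s IH] //=; case: ifP => // /negbFE/eqP h /IH; split => //.
Qed.

Definition bnd V (l : lin (option V)) : lin V := lscale (- (cN l)^-1) (lrest l).
Definition lsubst V (sol : lin V) (l : lin (option V)) : lin V :=
  ladd (lscale (cN l) sol) (lrest l).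

Definition celim V (C : cnj (option V)) : cnj V :=
  match pick_piv C.1 with
  | Some l0 => (map (lsubst (bnd l0)) C.1, map (lsubst (bnd l0)) C.2)
  | None => (map (@lrest V) C.1,
     map (@lrest V) (filter (fun l => cN l == 0) C.2) ++
     flatten (map (fun lo => map (fun up => lsub up lo)
                     (map (@bnd V) (filter (fun l => ltL (cN l) 0) C.2)))
                  (map (@bnd V) (filter (fun l => ltL 0 (cN l)) C.2))))
  end.

Lemma leval_lsubst V (e : V -> M) sol l :
  leval e (lsubst sol l) = leval (ext e (leval e sol)) l.
Proof. by rewrite leval_add leval_scale leval_ext. Qed.

Lemma piv_solve V (e : V -> M) a l0 : cN l0 != 0 -> leval (ext e a) l0 = 0 ->
  a = leval e (bnd l0).
Proof.
move=> nz; rewrite leval_ext leval_scale => /eqP; rewrite addr_eq0 => /eqP h.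
have u := Lunit nz.
by rewrite -[a]scale1r -(mulVr u) -scalerA h scalerN scaleNr.
Qed.

Lemma bnd_pos (mu : L) (a t : M) : ltL 0 mu ->
  ltM 0 (mu *: a + t) <-> ltM (- (mu^-1) *: t) a.
Proof.
move=> hmu; have u := Lunit (Lneq0 hmu).
have -> : ltM 0 (mu *: a + t) = ltM (- t) (mu *: a) by rewrite [RHS]Msub opprK.
rewrite scaleNr -scalerN; split => h.
  by have := Mscale (Linv_pos hmu) h; rewrite scalerA mulVr ?scale1r.
by have := Mscale hmu h; rewrite scalerA mulrV ?scale1r.
Qed.

Lemma bnd_neg (mu : L) (a t : M) : ltL mu 0 ->
  ltM 0 (mu *: a + t) <-> ltM a (- (mu^-1) *: t).
Proof.
move=> hmu; rewrite Lopp in hmu; have u := Lunit (Lneq0 hmu).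
have -> : mu *: a + t = t - (- mu) *: a by rewrite scaleNr opprK addrC.
rewrite -Msub -invrN; split => h.
  by have := Mscale (Linv_pos hmu) h; rewrite scalerA mulVr ?scale1r.
by have := Mscale hmu h; rewrite scalerA mulrV ?scale1r.
Qed.

Section Between.
Variable u : M.
Hypothesis hu : ltM 0 u.

Lemma below_all (x : M) us : Pall (fun v => ltM x v) us ->
  exists a, ltM x a /\ Pall (fun v => ltM a v) us.
Proof.
elim: us => [|v us IH] /=.
  by move=> _; exists (x + u); split => //; rewrite -{1}(addr0 x); apply: Maddl.
move=> [hv /IH [a [hxa ha]]].
case: (boolP (ltM a v)) => hav; first by exists a.
have hva : leM v a by apply: Mnlt => h; rewrite h in hav.
have [h1 h2] := Mmid hv.
exists (half *: (x + v)); split => //; split => //.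
apply: (Pall_impl _ ha) => w hw; apply: Mtrans hw; apply: lt_leM h2 hva.
Qed.

Lemma exists_below us : exists a, Pall (fun v => ltM a v) us.
Proof.
elim: us => [|v us [a ha]] /=; first by exists 0.
case: (boolP (ltM a v)) => hav; first by exists a.
have hva : leM v a by apply: Mnlt => h; rewrite h in hav.
have hvu : ltM (v - u) v by rewrite Msub opprB addrC subrK.
exists (v - u); split => //.
apply: (Pall_impl _ ha) => w hw; apply: Mtrans hw; apply: lt_leM hvu hva.
Qed.

Lemma between ls us : Pall (fun l => Pall (fun v => ltM l v) us) ls ->
  exists a, Pall (fun l => ltM l a) ls /\ Pall (fun v => ltM a v) us.
Proof.
elim: ls => [|l ls IH] /=.
  by move=> _; have [a ha] := exists_below us; exists a.
move=> [hl /IH [a [ha1 ha2]]].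
case: (boolP (ltM l a)) => hla; first by exists a.
have hal : leM a l by apply: Mnlt => h; rewrite h in hla.
have [b [hlb hb]] := below_all hl.
exists b; split => //; split => //.
apply: (Pall_impl _ ha1) => w hw; apply: Mtrans hlb; apply: lt_leM hw hal.
Qed.

Lemma celim_sat V (e : V -> M) C :
  (exists a, csat (ext e a) C) <-> csat e (celim C).
Proof.
rewrite /celim; case hp: (pick_piv C.1) => [l0|].
  have [nz hall] := pick_piv_some hp.
  rewrite /csat /= !Pall_map.
  have E1 : forall l, (leval e (lsubst (bnd l0) l) = 0) <-> (leval (ext e (leval e (bnd l0))) l = 0).
    by move=> l; rewrite leval_lsubst.
  have E2 : forall l, ltM 0 (leval e (lsubst (bnd l0) l)) <-> ltM 0 (leval (ext e (leval e (bnd l0))) l).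
    by move=> l; rewrite leval_lsubst.
  rewrite (Pall_iff _ E1) (Pall_iff _ E2).
  split; last by move=> h; exists (leval e (bnd l0)).
  move=> [a [h1 h2]].
  have ha := piv_solve nz (hall _ h1).
  by rewrite -ha.
have h0 := pick_piv_none hp.
rewrite /csat /= Pall_cat !Pall_map Pall_filter Pall_flatten.
split.
  move=> [a [h1 h2]]; split.
    by apply: (Pall_impl2 _ h0 h1) => l hl; rewrite leval_ext hl scale0r add0r.
  split.
    by apply: (Pall_impl _ h2) => l hl /eqP hl'; rewrite leval_ext hl' scale0r add0r in hl.
  apply/Pall_map/Pall_filter; apply: (Pall_impl _ h2) => l hl hpos.
  apply/Pall_map/Pall_map/Pall_filter; apply: (Pall_impl _ h2) => l' hl' hneg.
  rewrite leval_sub -Msub.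
  rewrite leval_ext in hl; rewrite leval_ext in hl'.
  rewrite /bnd !leval_scale.
  apply: Mtrans ((bnd_pos _ _ hpos).1 hl) ((bnd_neg _ _ hneg).1 hl').
move=> [h1 [hz hp2]].
move: hp2; rewrite Pall_map Pall_filter => hp2.
have hp3 : Pall (fun l => Pall (fun v => ltM l v)
          (map (leval e) (map (@bnd V) (filter (fun l => ltL (cN l) 0) C.2))))
         (map (leval e) (map (@bnd V) (filter (fun l => ltL 0 (cN l)) C.2))).
  rewrite !Pall_map Pall_filter; apply: (Pall_impl _ hp2) => l hl hpos.
  rewrite !Pall_map Pall_filter; move: (hl hpos); rewrite !Pall_map Pall_filter.
  apply: Pall_impl => l' hl' hneg; move: (hl' hneg); rewrite leval_sub -Msub //.
have [a [ha1 ha2]] := between hp3.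
exists a; split.
  by apply: (Pall_impl2 _ h0 h1) => l hl; rewrite leval_ext hl scale0r add0r.
move: ha1 ha2; rewrite !Pall_map !Pall_filter => ha1 ha2.
have := Pall_impl2 (fun l (X : cN l == 0 -> ltM 0 (leval e (lrest l)))
   (Y : ltL 0 (cN l) -> ltM (leval e (bnd l)) a) => conj X Y) hz ha1.
move=> h3; apply: (Pall_impl2 _ h3 ha2) => l [X Y] Z.
rewrite leval_ext.
case: (boolP (cN l == 0)) => hc.
  by rewrite (eqP hc) scale0r add0r; apply: X.
case: (Lsign hc) => hs.
  by apply/(bnd_pos _ _ hs); move: (Y hs); rewrite /bnd leval_scale.
by apply/(bnd_neg _ _ hs); move: (Z hs); rewrite /bnd leval_scale.
Qed.

Lemma qe V (f : formula M V) : exists D : seq (cnj V), forall e, sat_ ltM f e <-> dsat e D.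
Proof.
elim: f => {V} [V t1 t2|V t1 t2|V g [D IH]|V g [D1 IH1] h [D2 IH2]|V g [D IH]].
- exists [:: ([:: lsub (tlin t1) (tlin t2)], [::])] => e /=.
  rewrite /dsat /csat /= leval_sub -!tlinE; split; first by move=> ->; rewrite subrr; tauto.
  by case=> [[[h _] _]|[]]; apply/eqP; rewrite -subr_eq0 h.
- exists [:: ([::], [:: lsub (tlin t2) (tlin t1)])] => e /=.
  rewrite /dsat /csat /= leval_sub -!tlinE -Msub; tauto.
- exists (dnot D) => e /=; rewrite dnot_sat IH; tauto.
- exists (dand D1 D2) => e /=; rewrite dand_sat IH1 IH2; tauto.
- exists (map (@celim V) D) => e /=.
  rewrite /dsat Pex_map.
  have -> : (exists a, sat_ ltM g (fun o => if o is Some v then e v else a)) <->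
            (exists a, Pex (csat (ext e a)) D).
    by split => -[a h]; exists a; [exact: (IH (ext e a)).1 h | exact: (IH (ext e a)).2 h].
  rewrite Pex_exists; apply: Pex_iff => C; exact: celim_sat.
Qed.


Lemma hasF_Pall T (p : pred T) s : ~~ has p s -> Pall (fun x => ~~ p x) s.
Proof. by elim: s => [|x s IH] //=; rewrite negb_or => /andP [h1 /IH h2]. Qed.

Lemma has_Pex T (p : pred T) s : has p s -> exists x, p x /\ (forall P, Pall P s -> P x).
Proof.
elim: s => [|x s IH] //= /orP [h|/IH [y [hy hP]]].
  by exists x; split => // P [].
by exists y; split => // P [_ /hP].
Qed.

Lemma dich (J : finType) (s : seq J) (rows : seq (J -> L)) : uniq s ->
  (exists a : J -> L, (forall j, j \notin s -> a j = 0) /\ (exists j, a j != 0) /\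
      Pall (fun c => \sum_j c j * a j = 0) rows)
  \/ (forall x : J -> M, (forall j, j \notin s -> x j = 0) ->
      Pall (fun c => \sum_j c j *: x j = 0) rows -> forall j, x j = 0).
Proof.
elim: s rows => [|j0 s IH] rows /=.
  by move=> _; right => x hx _ j; apply: hx.
move=> /andP [j0s us].
case: (boolP (has (fun c : J -> L => c j0 != 0) rows)) => hh; last first.
  left; exists (fun j => if j == j0 then 1 else 0); split.
    by move=> j; rewrite in_cons negb_or => /andP [/negbTE -> _].
  split; first by exists j0; rewrite eqxx oner_neq0.
  apply: (Pall_impl _ (hasF_Pall hh)) => c /negPn /eqP hc.
  rewrite (bigD1 j0) //= eqxx mulr1 hc add0r big1 // => j /negbTE ->; exact: mulr0.
have [c0 [hc0 hmem]] := has_Pex hh.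
have u0 := Lunit hc0.
pose mu (c : J -> L) := c j0 * (c0 j0)^-1.
pose rows' := map (fun c => fun j => c j - mu c * c0 j) rows.
case: (IH rows' us) => [[a' [sa' [[j1 nz1] ha']]]|H'].
  have a'j0 : a' j0 = 0 by apply: sa'.
  left; exists (fun j => if j == j0 then - (c0 j0)^-1 * \sum_k c0 k * a' k else a' j).
  split.
    by move=> j; rewrite in_cons negb_or => /andP [/negbTE -> /sa'].
  split.
    exists j1; have nj : j1 != j0 by apply/eqP => e; move: nz1; rewrite e a'j0 eqxx.
    by rewrite (negbTE nj).
  move: ha'; rewrite /rows' Pall_map; apply: Pall_impl => c hc.
  have hS : \sum_j c j * a' j = mu c * \sum_j c0 j * a' j.
    apply/eqP; rewrite -subr_eq0 mulr_sumr -sumrB; apply/eqP; rewrite -[RHS]hc.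
    by apply: eq_bigr => j _; rewrite mulrBl mulrA.
  rewrite (bigD1 j0) //= eqxx.
  have -> : \sum_(j | j != j0) c j * (if j == j0 then - (c0 j0)^-1 * \sum_k c0 k * a' k else a' j)
          = \sum_j c j * a' j.
    rewrite [RHS](bigD1 j0) //= a'j0 mulr0 add0r.
    by apply: eq_bigr => j /negbTE ->.
  by rewrite hS /mu mulNr mulrN mulrA addNr.
right => x sx hx.
pose x' := fun j => if j == j0 then 0 else x j.
have hc0x : \sum_j c0 j *: x j = 0 by apply: hmem hx.
have H0 : forall j, x' j = 0.
  apply: H'.
    move=> j hj; rewrite /x'; case: eqP => // /eqP nj; apply: sx.
    by rewrite in_cons negb_or nj hj.
  rewrite /rows' Pall_map; apply: (Pall_impl _ hx) => c hc.
  have -> : \sum_j (c j - mu c * c0 j) *: x' j = \sum_j (c j - mu c * c0 j) *: x j.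
    apply: eq_bigr => j _; rewrite /x'; case: eqP => [->|//].
    by rewrite /mu -mulrA mulVr // mulr1 subrr !scale0r.
  rewrite (eq_bigr (fun j => c j *: x j - mu c *: (c0 j *: x j))); last first.
    by move=> j _; rewrite scalerBl scalerA.
  by rewrite sumrB -scaler_sumr hc hc0x scaler0 subrr.
have hx0 : forall j, j != j0 -> x j = 0.
  by move=> j nj; have := H0 j; rewrite /x' (negbTE nj).
have : c0 j0 *: x j0 = 0.
  rewrite -hc0x (bigD1 j0) //= big1 ?addr0 // => j nj; by rewrite hx0 // scaler0.
move=> h j; case: (boolP (j == j0)) => [/eqP ->|/hx0 //].
by rewrite -[x j0]scale1r -(mulVr u0) -scalerA h scaler0.
Qed.

Definition small (Q : M -> Prop) :=
  exists eps, ltM 0 eps /\ forall m, ltM 0 m -> leM m eps -> Q m.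

Lemma small_and Q1 Q2 : small Q1 -> small Q2 -> small (fun m => Q1 m /\ Q2 m).
Proof.
move=> [e1 [p1 h1]] [e2 [p2 h2]].
case: (boolP (ltM e1 e2)) => h.
  exists e1; split => // m hm hle; split; first exact: h1.
  by apply: h2 => //; apply: leM_trans hle _; left.
have h' : leM e2 e1 by apply: Mnlt => h'; rewrite h' in h.
exists e2; split => // m hm hle; split; last exact: h2.
by apply: h1 => //; apply: leM_trans hle h'.
Qed.

Lemma small_Pall T (Q : T -> M -> Prop) s :
  Pall (fun x => small (Q x)) s -> small (fun m => Pall (fun x => Q x m) s).
Proof.
elim: s => [|x s IH] /=; first by move=> _; exists u.
move=> [hx /IH hs]; exact: small_and hx hs.
Qed.

Lemma Pall_all T (P : T -> Prop) s : (forall x, P x) -> Pall P s.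
Proof. by move=> h; elim: s => //= x s IH; split. Qed.

Lemma Pall_mem (T : eqType) (P : T -> Prop) s x : Pall P s -> x \in s -> P x.
Proof.
elim: s => [|y s IH] //= [hy hs]; rewrite in_cons; case: eqP => [->|_] //= /IH; exact.
Qed.

Lemma Pall_forall T I (P : I -> T -> Prop) s :
  (forall i, Pall (P i) s) -> Pall (fun x => forall i, P i x) s.
Proof.
elim: s => [|x s IH] //= h; split; first by move=> i; case: (h i).
by apply: IH => i; case: (h i).
Qed.

Lemma small_fin (I : finType) (Q : I -> M -> Prop) :
  (forall i, small (Q i)) -> small (fun m => forall i, Q i m).
Proof.
move=> h; have [eps [he hs]] := small_Pall (Pall_all (enum I) h).
exists eps; split => // m hm hle i.
by apply: (Pall_mem (hs m hm hle)); rewrite mem_enum.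
Qed.

Lemma small_term (beta : L) (eta : M) : ltM 0 eta ->
  small (fun m => ltM (- eta) (beta *: m)).
Proof.
move=> he.
have hneg : ltM (- eta) 0 by rewrite Mopp opprK oppr0.
case: (boolP (beta == 0)) => [/eqP ->|nz].
  by exists eta; split => // m _ _; rewrite scale0r.
case: (Lsign nz) => hb.
  by exists eta; split => // m hm _; apply: Mtrans hneg (Mscale_pos hb hm).
have hb' : ltL 0 (- beta) by rewrite -Lopp.
exists ((- beta)^-1 *: (half *: eta)); split.
  exact: Mscale_pos (Linv_pos hb') (half_pos he).
move=> m hm hle.
have := Mscale_le hb' hle; rewrite scalerA mulrV ?scale1r; last exact: Lunit (Lneq0 hb').
move=> h; have h2 : ltM ((- beta) *: m) eta := le_ltM h (half_lt he).
by rewrite Mopp opprK -scaleNr.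
Qed.

Definition mseq (eps : M) (n : nat) : M := iter n (fun x => half *: x) eps.

Lemma mseqS eps n : mseq eps n.+1 = half *: mseq eps n.
Proof. by rewrite /mseq iterS. Qed.

Lemma mseq_pos eps n : ltM 0 eps -> ltM 0 (mseq eps n).
Proof. by move=> he; elim: n => [|n IH] //; rewrite mseqS; apply: half_pos. Qed.

Lemma mseq_le eps n : ltM 0 eps -> leM (mseq eps n) eps.
Proof.
move=> he; elim: n => [|n IH]; first exact: leM_refl.
by left; rewrite mseqS; apply: lt_leM (half_lt (mseq_pos n he)) IH.
Qed.

Lemma mseq_dec eps n k : ltM 0 eps -> ltM (mseq eps (k + n).+1) (mseq eps n).
Proof.
move=> he; elim: k => [|k IH]; first by rewrite add0n mseqS; exact: half_lt (mseq_pos n he).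
rewrite addSn; apply: Mtrans IH; rewrite mseqS; exact: half_lt (mseq_pos _ he).
Qed.

Lemma mseq_inj eps : ltM 0 eps -> injective (mseq eps).
Proof.
move=> he n n' h.
case: (ltngtP n n') => // hlt.
  have := mseq_dec n (n' - n.+1) he; rewrite -addnS subnK // -h.
  by rewrite (negbTE (Mirr _)).
have := mseq_dec n' (n - n'.+1) he; rewrite -addnS subnK // h.
by rewrite (negbTE (Mirr _)).
Qed.

Lemma inj_infinite (T : eqType) (A : T -> Prop) (f : nat -> T) :
  injective f -> (forall n, A (f n)) -> infinite_set A.
Proof.
move=> inj hA [s hs].
have huq : uniq (map f (seq.iota 0 (size s).+1)) by rewrite map_inj_uniq // iota_uniq.
have hsub : {subset map f (seq.iota 0 (size s).+1) <= s}.
  by move=> x /mapP [n _ ->]; apply: hs.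
by have := uniq_leq_size huq hsub; rewrite size_map size_iota ltnn.
Qed.

Definition coef (V : finType) (l : lin V) (v : V) : L :=
  \sum_(p <- l.1) (if p.1 == v then p.2 else 0).

Lemma leval_coef (V : finType) (e : V -> M) l : leval e l = \sum_v coef l v *: e v + l.2.
Proof.
case: l => s c; rewrite /leval /coef /=; congr (_ + _).
elim: s => [|[w x] s IH].
  by rewrite big_nil big1 // => v _; rewrite big_nil scale0r.
rewrite big_cons IH /=.
rewrite [RHS](eq_bigr (fun v => (if w == v then x else 0) *: e v +
     (\sum_(p <- s) (if p.1 == v then p.2 else 0)) *: e v)); last first.
  by move=> v _; rewrite big_cons scalerDl.
rewrite big_split /=; congr (_ + _).
rewrite (bigD1 w) //= eqxx big1 ?addr0 // => v nv.
by rewrite eq_sym (negbTE nv) scale0r.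
Qed.

Lemma eq_leval V (e e' : V -> M) l : (forall v, e v = e' v) -> leval e l = leval e' l.
Proof. by move=> h; rewrite /leval; congr (_ + _); apply: eq_bigr => p _; rewrite h. Qed.

Lemma leval_pert (V : finType) (e w : V -> M) l :
  leval (fun v => e v + w v) l = leval e l + \sum_v coef l v *: w v.
Proof.
rewrite !leval_coef (eq_bigr (fun v => coef l v *: e v + coef l v *: w v)); last first.
  by move=> v _; rewrite scalerDr.
by rewrite big_split /= addrAC.
Qed.

Lemma leval_diff (V : finType) (e e' : V -> M) l :
  leval e l - leval e' l = \sum_v coef l v *: (e v - e' v).
Proof.
rewrite !leval_coef opprD addrACA subrr addr0 -sumrB.
by apply: eq_bigr => v _; rewrite scalerBr.
Qed.

Lemma le_sum (I : finType) (f g : I -> M) :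
  (forall i, leM (f i) (g i)) -> leM (\sum_i f i) (\sum_i g i).
Proof.
move=> h; apply: (big_ind2 leM); first exact: leM_refl.
  by move=> ? ? ? ? ; apply: leM_add2.
by move=> i _; apply: h.
Qed.

Definition bs r (d : 'I_r -> nat) (i : 'I_r) : seq {i : 'I_r & 'I_(d i)} :=
  enum [pred v : {i : 'I_r & 'I_(d i)} | tag v == i].
Arguments bs {r} d i.

Lemma csat_functional r (d : 'I_r -> nat) (C : cnj {i : 'I_r & 'I_(d i)}) (i : 'I_r) :
  (forall x : {i : 'I_r & 'I_(d i)} -> M, (forall v, v \notin bs d i -> x v = 0) ->
     Pall (fun c => \sum_v c v *: x v = 0) (map (@coef _) C.1) -> forall v, x v = 0) ->
  forall p q : point M d, csat (coord_env p) C -> csat (coord_env q) C ->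
    (forall j, j != i -> p j = q j) -> p i = q i.
Proof.
move=> H p q [hp _] [hq _] hj.
pose x v := coord_env p v - coord_env q v.
have hx : forall v, x v = 0.
  apply: H.
    move=> v; rewrite mem_enum inE => hv.
    by rewrite /x /coord_env hj // subrr.
  rewrite Pall_map; apply: (Pall_impl2 _ hp hq) => l h1 h2.
  by rewrite -leval_diff h1 h2 subrr.
apply/matrixP => a b; rewrite (ord1 a).
have := hx (Tagged (fun i => 'I_(d i)) b); rewrite /x /coord_env /=.
by move/eqP; rewrite subr_eq0 => /eqP.
Qed.

Lemma csat_grid r (d : 'I_r -> nat) (C : cnj {i : 'I_r & 'I_(d i)}) (p : point M d)
    (a : 'I_r -> {i : 'I_r & 'I_(d i)} -> L) :
  (forall i v, v \notin bs d i -> a i v = 0) -> (forall i, exists v, a i v != 0) ->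
  (forall i, Pall (fun c => \sum_v c v * a i v = 0) (map (@coef _) C.1)) ->
  csat (coord_env p) C -> contains_infinite_grid (fun q : point M d => csat (coord_env q) C).
Proof.
move=> hs hnz hk [hp1 hp2].
pose beta (l : lin {i : 'I_r & 'I_(d i)}) i := \sum_v coef l v * a i v.
pose eta' (l : lin {i : 'I_r & 'I_(d i)}) := ((r.+1)%:R)^-1 *: leval (coord_env p) l.
have hsm : small (fun m => Pall (fun l => forall i, ltM (- eta' l) (beta l i *: m)) C.2).
  apply: small_Pall; apply: (Pall_impl _ hp2) => l hl; apply: small_fin => i.
  apply: small_term; exact: Mscale_pos (Linv_pos (Lnat r)) hl.
have [eps [heps hsmall]] := hsm.
pose f i n : 'rV[M]_(d i) := p i + \row_j (a i (Tagged (fun i => 'I_(d i)) j) *: mseq eps n).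
exists (fun i x => exists n, x = f i n); split.
  move=> i; apply: (inj_infinite (f := f i)); last by move=> n; exists n.
  have [v nz] := hnz i.
  have hv : tag v == i.
    case: (boolP (tag v == i)) => // hv; move: nz; rewrite hs ?eqxx //.
    by rewrite mem_enum inE.
  case: v hv nz => i' j /= /eqP e; subst i' => nz.
  move=> n n' /matrixP /(_ 0 j); rewrite !mxE => /addrI h.
  apply: (mseq_inj heps).
  by rewrite -[mseq eps n]scale1r -(mulVr (Lunit nz)) -scalerA h scalerA mulVr ?scale1r // Lunit.
move=> q hq.
have hq' : forall i, exists n, q i == f i n by move=> i; case: (hq i) => n ->; exists n; rewrite eqxx.
pose nn i := ex_minn (hq' i).
pose mu i := mseq eps (nn i).
have hqi : forall i, q i = f i (nn i).
  by move=> i; rewrite /nn; case: ex_minnP => n /eqP.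
have hsum : forall l, leval (coord_env q) l = leval (coord_env p) l + \sum_i beta l i *: mu i.
  move=> l.
  rewrite (@eq_leval _ _ (fun v => coord_env p v + a (tag v) v *: mu (tag v))); last first.
    by case=> i j; rewrite /coord_env /= hqi /f !mxE.
  rewrite leval_pert; congr (_ + _).
  rewrite /beta (eq_bigr (fun i => \sum_v (coef l v * a i v) *: mu i)); last first.
    by move=> i _; rewrite scaler_suml.
  rewrite exchange_big /=; apply: eq_bigr => v _.
  rewrite (bigD1 (tag v)) //= big1 ?addr0 ?scalerA // => i ni.
  by rewrite hs ?mulr0 ?scale0r // mem_enum inE eq_sym.
split.
  have hk' := Pall_forall hk; rewrite Pall_map in hk'.
  apply: (Pall_impl2 _ hp1 hk') => l h1 h2.
  rewrite hsum h1 add0r big1 // => i _.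
  by have := h2 i; rewrite /beta => ->; rewrite scale0r.
have H3 : forall i, Pall (fun l => ltM (- eta' l) (beta l i *: mu i)) C.2.
  move=> i; apply: (Pall_impl _ (hsmall (mu i) (mseq_pos _ heps) (mseq_le _ heps))).
  by move=> l h; apply: h.
apply: (Pall_impl2 _ hp2 (Pall_forall H3)) => l hl hl2.
rewrite hsum.
have hle : leM (\sum_(i < r) - eta' l) (\sum_i beta l i *: mu i).
  by apply: le_sum => i; left; apply: hl2.
have heta : leval (coord_env p) l = eta' l *+ r.+1.
  by rewrite -scaler_nat scalerA mulrV ?scale1r // Lunit // Lneq0 // Lnat.
have hpos : ltM 0 (eta' l) by exact: Mscale_pos (Linv_pos (Lnat r)) hl.
apply: lt_leM hpos _.
have := leM_add2 (leM_refl (leval (coord_env p) l)) hle.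
by rewrite sumr_const card_ord heta mulNrn mulrSr addrAC subrr add0r.
Qed.
End Between.
End Ord.

Section Count.
Variables (L : unitRingType) (M : lmodType L).

Lemma pboolP (P : Prop) : pbool P = true <-> P.
Proof. by rewrite /pbool; case: excluded_middle_informative. Qed.

Lemma count_mono r (d : 'I_r -> nat) (E E' : point M d -> Prop) B :
  (forall p, E p -> E' p) -> (grid_count E B <= grid_count E' B)%nat.
Proof.
move=> h; apply: subset_leq_card; apply/subsetP => f; rewrite !inE.
by move/pboolP/h/pboolP ->.
Qed.

Lemma count_union r (d : 'I_r -> nat) (E1 E2 : point M d -> Prop) B :
  (grid_count (fun p => E1 p \/ E2 p) B <= grid_count E1 B + grid_count E2 B)%nat.
Proof.
rewrite /grid_count; apply: leq_trans (leq_card_setU _ _).1.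
apply: subset_leq_card; apply/subsetP => f; rewrite !inE.
by move/pboolP => [h|h]; apply/orP; [left|right]; apply/pboolP.
Qed.

Lemma count_false r (d : 'I_r -> nat) B : grid_count (fun _ : point M d => False) B = 0%nat.
Proof.
apply/eqP; rewrite cards_eq0; apply/eqP/setP => f; rewrite !inE.
by apply/negP => /pboolP.
Qed.

Lemma count_r0 (d : 'I_0 -> nat) (E : point M d -> Prop) B :
  (grid_count E B <= grid_delta B)%nat.
Proof.
rewrite /grid_delta (bigD1 set0) /=; last by rewrite cards0.
rewrite big_set0 /grid_count; apply: leq_trans (leq_addr _ _).
apply: leq_trans (max_card _) _.
by rewrite card_dep_ffun foldrE big_map big_enum /= big_ord0.
Qed.

Lemma count_functional r (d : 'I_r -> nat) (E : point M d -> Prop) B (i : 'I_r) :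
  (forall p q, E p -> E q -> (forall j, j != i -> p j = q j) -> p i = q i) ->
  (grid_count E B <= grid_delta B)%nat.
Proof.
move=> hfun.
pose F := {dffun forall j : 'I_r, B j}.
pose S := [set f : F | pbool (E (fun j => val (f j)))].
rewrite /grid_count -/S.
case: (set_0Vmem S) => [->|[f0 hf0]]; first by rewrite cards0.
pose b0 := f0 i.
pose phi (f : F) : F := finfun (dfwith (fun j => f j) b0).
pose T0 := [set g : F | g i == b0].
have h1 : (#|S| <= #|T0|)%nat.
  rewrite -(card_in_imset (f := phi)).
    apply: subset_leq_card; apply/subsetP => g /imsetP [f _ ->].
    by rewrite inE /phi ffunE dfwith_in.
  move=> f g; rewrite !inE => /pboolP hf /pboolP hg hfg.
  have hj : forall j, j != i -> f j = g j.
    move=> j nj; have := congr1 (fun h : F => h j) hfg.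
    by rewrite /phi !ffunE !dfwith_out // eq_sym.
  apply/ffunP => j; case: (boolP (j == i)) => [/eqP ->|/hj //].
  apply: val_inj; have := hfun _ _ hf hg.
  move=> h; have := h (fun j nj => congr1 val (hj j nj)) => /= h'.
  exact: h'.
pose psi (x : F * B i) : F := finfun (dfwith (fun j => x.1 j) x.2).
have h2 : (#|T0| * #|{: B i}| <= #|F|)%nat.
  rewrite -cardsT -cardsX -(card_in_imset (f := psi)); first exact: max_card.
  move=> [g b] [g' b']; rewrite !inE /= !andbT => /eqP hg /eqP hg' h.
  have hb : b = b'.
    by have := congr1 (fun h : F => h i) h; rewrite /psi !ffunE !dfwith_in.
  subst b'; congr (_, _); apply/ffunP => j.
  case: (boolP (j == i)) => [/eqP ->|nj]; first by rewrite hg hg'.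
  have := congr1 (fun h : F => h j) h.
  by rewrite /psi !ffunE !dfwith_out // eq_sym.
have hF : #|F| = (\prod_j #|{: B j}|)%nat.
  by rewrite card_dep_ffun foldrE big_map big_enum.
have hBi : (0 < #|{: B i}|)%nat by apply/card_gt0P; exists b0.
have h3 : (#|T0| <= \prod_(j | j != i) #|{: B j}|)%nat.
  rewrite -(leq_pmul2r hBi); apply: leq_trans h2 _.
  by rewrite hF (bigD1 i) //= mulnC.
apply: leq_trans h1 (leq_trans h3 _).
rewrite /grid_delta (bigD1 [set~ i]) /=; last by rewrite cardsC1 card_ord.
apply: leq_trans (leq_addr _ _).
apply: eq_leq; apply: eq_big => [j|j _]; first by rewrite !inE.
by rewrite cardfE.
Qed.

End Count.

Lemma Pall_self T A (Q : T -> A -> Prop) s :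
  Pall (fun x => forall y, Q x y -> Pex (fun x' => Q x' y) s) s.
Proof.
elim: s => [|x s IH] //=; split; first by move=> y h; left.
by apply: (Pall_impl _ IH) => x' h y hy; right; apply: h.
Qed.

Lemma count_Pex (L : unitRingType) (M : lmodType L) r (d : 'I_r -> nat) T
    (P : T -> point M d -> Prop) B (D : seq T) :
  Pall (fun C => (grid_count (P C) B <= grid_delta B)%nat) D ->
  (grid_count (fun p => Pex (fun C => P C p) D) B <= size D * grid_delta B)%nat.
Proof.
elim: D => [|C D IH] /=; first by rewrite count_false.
move=> [h1 /IH h2]; apply: leq_trans (count_union _ _ _) _.
by rewrite mulSn leq_add.
Qed.

Lemma grid_mono (L : unitRingType) (M : lmodType L) r (d : 'I_r -> nat)
    (E E' : point M d -> Prop) :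
  (forall p, E p -> E' p) -> contains_infinite_grid E -> contains_infinite_grid E'.
Proof. by move=> h [G [h1 h2]]; exists G; split => // p /h2 /h. Qed.

Lemma main_nat (L : unitRingType) (ltL : rel L) (M : lmodType L) (ltM : rel M)
    (HL : ordered_division_ring ltL) (HM : ordered_vector_space ltL ltM)
    (u : M) (hu : ltM 0 u)
    (r : nat) (d : 'I_r -> nat) (E : point M d -> Prop) (D : seq (cnj M {i : 'I_r & 'I_(d i)}))
    (HD : forall p, E p <-> dsat ltM (coord_env p) D) :
  ~ contains_infinite_grid E ->
  forall B : forall i : 'I_r, {fset 'rV[M]_(d i)},
    (grid_count E B <= size D * grid_delta B)%nat.
Proof.
move=> noG B.
apply: leq_trans (count_mono (E' := fun p => Pex (fun C => csat ltM (coord_env p) C) D) _ _) _.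
  by move=> p /HD.
apply: count_Pex.
apply: (Pall_impl _ (Pall_self (fun C (p : point M d) => csat ltM (coord_env p) C) D)).
move=> C hC.
have hsub : forall p, csat ltM (coord_env p) C -> E p.
  by move=> p hp; apply/HD; apply: hC.
case: (classic (exists i : 'I_r, forall x : {i : 'I_r & 'I_(d i)} -> M,
    (forall v, v \notin bs d i -> x v = 0) ->
    Pall (fun c => \sum_v c v *: x v = 0) (map (@coef _ _ _) C.1) -> forall v, x v = 0)).
  move=> [i hi]; apply: (@count_functional _ _ _ _ _ B i) => p q hp hq hj.
  exact: (csat_functional hi hp hq hj).
move=> hno.
have hleft : forall i : 'I_r, exists a : {i : 'I_r & 'I_(d i)} -> L,
    (forall v, v \notin bs d i -> a v = 0) /\ (exists v, a v != 0) /\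
    Pall (fun c => \sum_v c v * a v = 0) (map (@coef _ _ _) C.1).
  move=> i; case: (dich M HL (map (@coef _ _ _) C.1) (enum_uniq _ : uniq (bs d i))) => // h.
  by case: hno; exists i.
pose a i := proj1_sig (constructive_indefinite_description _ (hleft i)).
have ha : forall i, (forall v, v \notin bs d i -> a i v = 0) /\ (exists v, a i v != 0) /\
    Pall (fun c => \sum_v c v * a i v = 0) (map (@coef _ _ _) C.1).
  by move=> i; rewrite /a; case: constructive_indefinite_description.
case: (classic (exists p : point M d, csat ltM (coord_env p) C)) => [[p hp]|hnp].
  case: noG; apply: (grid_mono hsub).
  apply: (csat_grid HL HM hu (a := a) _ _ _ hp).
  - by move=> i v; case: (ha i) => h _; apply: h.
  - by move=> i; case: (ha i) => _ [h _].
  - by move=> i; case: (ha i) => _ [_ h].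
apply: leq_trans (count_mono (E' := fun _ => False) _ _) _.
  by move=> p hp; apply: hnp; exists p.
by rewrite count_false.
Qed.

Close Scope ring_scope.

Theorem corollary2p23
    (L : unitRingType) (ltL : rel L) (M : lmodType L) (ltM : rel M)
    (HL : ordered_division_ring ltL) (HM : ordered_vector_space ltL ltM)
    (r : nat) (d : 'I_r -> nat) (E : point M d -> Prop)
    (HE : semilinear_set ltM E) :
  exists alpha : R, (0 < alpha)%R /\
    (~ contains_infinite_grid E ->
     forall B : forall i : 'I_r, {fset 'rV[M]_(d i)},
       (INR (grid_count E B) <= alpha * INR (grid_delta B))%R).
Proof.
have conv : forall n m k : nat, (n <= m * k)%nat -> (INR n <= INR m * INR k)%R.
  by move=> n m k h; rewrite -mult_INR; apply: le_INR; apply/leP.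
move: d E HE; case: r => [|r] d E HE.
  exists (INR 1); split; first exact: Rlt_0_1.
  by move=> _ B; apply: conv; rewrite mul1n; apply: count_r0.
case: (classic (exists m : M, m != GRing.zero)) => [[m nz]|triv].
  have [u hu] : exists u : M, ltM GRing.zero u.
    have := Mtot HM GRing.zero m; rewrite eq_sym (negbTE nz) orbF => /orP [h|h].
      by exists m.
    by exists (GRing.opp m); rewrite (Mopp HM) oppr0 in h.
  case: HE => f hf.
  have [D HD] := qe HL HM hu f.
  exists (INR (size D).+1); split.
    by apply: lt_0_INR; apply/ltP.
  move=> noG B; apply: conv.
  apply: leq_trans (leq_mul (leqnSn (size D)) (leqnn _)).
  apply: (main_nat HL HM hu (D := D)) => // p; rewrite hf; exact: HD.
have h0 : forall x : M, x = GRing.zero.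
  by move=> x; apply/eqP/negPn/negP => h; apply: triv; exists x.
exists (INR 1); split; first exact: Rlt_0_1.
move=> _ B; apply: conv; rewrite mul1n.
apply: (@count_functional _ _ _ _ _ B ord0) => p q _ _ _.
by apply/matrixP => a b; rewrite (h0 (p ord0 a b)) (h0 (q ord0 a b)).
Qed.
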